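(* Let $R$ be a commutative noetherian ring, let $\Phi$ be a specialization-closed subset of $\operatorname{Spec}R$, and let $n\ge0$ be an integer. Then the complement $\Phi^{\complement}=\operatorname{Spec}R\setminus\Phi$ is $n$-coherent if and only if $\mathrm H^i_\Phi(M)=0$ for all $i>n$ for every $R$-module $M$ satisfying $\mathrm H^i_\Phi(M)=0$ for all $i\le n$.
   Context: $\Phi$ specialization-closed means $\mathfrak p\in\Phi,\ \mathfrak p\subseteq\mathfrak q$ imply $\mathfrak q\in\Phi$. $\Gamma_\Phi(M)=\{m\in M\mid \operatorname{Supp}_R(Rm)\subseteq\Phi\}$ and $\mathrm H^i_\Phi$ is the $i$th right derived functor of $\Gamma_\Phi$ (local cohomology with respect to $\Phi$). A subset $\Psi\subseteq\operatorname{Spec}R$ is $n$-coherent if for every exact sequence $\cdots\to I_1\to I_0\to C\to0$ of $R$-modules with $I_i$ injective and $\operatorname{Ass}I_i\subseteq\Psi$ for $0\le i\le n$, the module $C$ embeds into an injective module $J$ with $\operatorname{Ass}J\subseteq\Psi$. *)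

(* Defs.v *)
From HB Require Import structures.
From mathcomp Require Import all_boot all_algebra.
Set Implicit Arguments. Unset Strict Implicit. Unset Printing Implicit Defensive.
Import GRing.Theory.
Local Open Scope ring_scope.

Section Defs.
Variable R : comNzRingType.

Definition is_ideal (I : R -> Prop) : Prop :=
  [/\ I 0, (forall x y, I x -> I y -> I (x + y)) & (forall r x, I x -> I (r * x))].

Definition is_prime_ideal (p : R -> Prop) : Prop :=
  [/\ is_ideal p, ~ p 1 & (forall x y, p (x * y) -> p x \/ p y)].

Definition spec := {p : R -> Prop | is_prime_ideal p}.
Definition pmem (p : spec) (x : R) : Prop := proj1_sig p x.

Definition noetherian : Prop :=
  forall I : nat -> R -> Prop, (forall k, is_ideal (I k)) ->
    (forall k x, I k x -> I k.+1 x) ->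
    exists N, forall k x, (N <= k)%N -> I k x -> I N x.

Definition specialization_closed (Phi : spec -> Prop) : Prop :=
  forall p q : spec, Phi p -> (forall x, pmem p x -> pmem q x) -> Phi q.

(* Support of a submodule N of M: primes p with N_p <> 0, i.e. some x in N
   with x/1 <> 0 in M_p, i.e. s *: x <> 0 for all s not in p. *)
Definition in_Supp (M : lmodType R) (N : M -> Prop) (p : spec) : Prop :=
  exists x, N x /\ forall s, ~ pmem p s -> s *: x <> 0.

Definition cyclic_sub (M : lmodType R) (m : M) : M -> Prop :=
  fun x => exists r : R, x = r *: m.

Definition in_Gamma (Phi : spec -> Prop) (M : lmodType R) (m : M) : Prop :=
  forall p, in_Supp (cyclic_sub m) p -> Phi p.

Definition Ass (M : lmodType R) (p : spec) : Prop :=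
  exists m : M, forall r : R, pmem p r <-> r *: m = 0.

Definition injective_module (J : lmodType R) : Prop :=
  forall (A B : lmodType R) (f : {linear A -> B}) (g : {linear A -> J}),
    injective f -> exists h : {linear B -> J}, forall a, h (f a) = g a.

Definition inj_resolution (M : lmodType R) (I : nat -> lmodType R)
  (d : forall i, {linear I i -> I i.+1}) (eps : {linear M -> I 0%N}) : Prop :=
  [/\ injective eps,
      (forall x, d 0%N x = 0 <-> exists m, eps m = x),
      (forall i x, d i.+1 x = 0 <-> exists y, d i y = x)
    & forall i, injective_module (I i)].

Definition Gamma_coh_zero (Phi : spec -> Prop) (I : nat -> lmodType R)
  (d : forall i, {linear I i -> I i.+1}) (i : nat) : Prop :=
  match i with
  | 0%N => forall x : I 0%N, in_Gamma Phi x -> d 0%N x = 0 -> x = 0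
  | j.+1 => forall x : I j.+1, in_Gamma Phi x -> d j.+1 x = 0 ->
              exists y : I j, in_Gamma Phi y /\ d j y = x
  end.

Definition H_Phi_zero (Phi : spec -> Prop) (M : lmodType R) (i : nat) : Prop :=
  forall (I : nat -> lmodType R) (d : forall i, {linear I i -> I i.+1})
         (eps : {linear M -> I 0%N}),
    inj_resolution d eps -> Gamma_coh_zero Phi d i.

Definition n_coherent (Psi : spec -> Prop) (n : nat) : Prop :=
  forall (C : lmodType R) (P : nat -> lmodType R)
         (e : forall i, {linear P i.+1 -> P i}) (pi : {linear P 0%N -> C}),
    (forall c, exists x, pi x = c) ->
    (forall x, pi x = 0 <-> exists y, e 0%N y = x) ->
    (forall i x, e i x = 0 <-> exists y, e i.+1 y = x) ->
    (forall i, (i <= n)%N ->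
       injective_module (P i) /\ forall p, Ass (P i) p -> Psi p) ->
    exists (J : lmodType R) (f : {linear C -> J}),
      [/\ injective f, injective_module J & forall p, Ass J p -> Psi p].

End Defs.

(* Main.v *)
Require Import Defs.
From HB Require Import structures.
From mathcomp Require Import all_boot all_order all_algebra.
From mathcomp Require boolp classical_sets.
From Stdlib Require Import ClassicalEpsilon ProofIrrelevance FunctionalExtensionality PropExtensionality Classical.
Set Implicit Arguments. Unset Strict Implicit. Unset Printing Implicit Defensive.
Import Order.TTheory GRing.Theory Num.Theory.
Local Open Scope ring_scope.


Section Basics.
Variable R : comNzRingType.

Definition mkLin (U V : lmodType R) (f : U -> V) (H : linear f) : {linear U -> V} :=
  HB.pack f (GRing.isLinear.Build R U V *:%R f H).

Lemma mkLinE (U V : lmodType R) (f : U -> V) (H : linear f) x : mkLin H x = f x.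
Proof. by []. Qed.

Record submod (V : lmodType R) := Submod {
  smP :> V -> Prop;
  sm0 : smP 0;
  smD : forall x y, smP x -> smP y -> smP (x + y);
  smZ : forall r x, smP x -> smP (r *: x) }.

Definition subm (V : lmodType R) (S : submod V) : Type := {x : V | S x}.

End Basics.

Section SubInst.
Variable R : comNzRingType.
Variable V : lmodType R.
Variable S : submod V.

HB.instance Definition _ := boolp.gen_eqMixin (subm S).
HB.instance Definition _ := boolp.gen_choiceMixin (subm S).

Lemma sval_inj : injective (@proj1_sig V S : subm S -> V).
Proof. move=> [x hx] [y hy] /= exy; subst y; by rewrite (proof_irrelevance _ hx hy). Qed.

Definition sub_zero : subm S := exist _ 0 (sm0 S).
Definition sub_add (x y : subm S) : subm S :=
  exist _ (proj1_sig x + proj1_sig y) (smD (proj2_sig x) (proj2_sig y)).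
Lemma smN (x : V) : S x -> S (- x).
Proof. by move=> h; rewrite -scaleN1r; apply: smZ. Qed.
Definition sub_opp (x : subm S) : subm S := exist _ (- proj1_sig x) (smN (proj2_sig x)).
Definition sub_scale (r : R) (x : subm S) : subm S := exist _ (r *: proj1_sig x) (smZ r (proj2_sig x)).

Lemma sub_addA : associative sub_add.
Proof. by move=> x y z; apply: sval_inj; rewrite /= addrA. Qed.
Lemma sub_addC : commutative sub_add.
Proof. by move=> x y; apply: sval_inj; rewrite /= addrC. Qed.
Lemma sub_add0 : left_id sub_zero sub_add.
Proof. by move=> x; apply: sval_inj; rewrite /= add0r. Qed.
Lemma sub_addN : left_inverse sub_zero sub_opp sub_add.
Proof. by move=> x; apply: sval_inj; rewrite /= addNr. Qed.

HB.instance Definition _ := GRing.isZmodule.Build (subm S) sub_addA sub_addC sub_add0 sub_addN.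

Lemma sub_scaleA a b (v : subm S) : sub_scale a (sub_scale b v) = sub_scale (a * b) v.
Proof. by apply: sval_inj; rewrite /= scalerA. Qed.
Lemma sub_scale1 : left_id 1 sub_scale.
Proof. by move=> x; apply: sval_inj; rewrite /= scale1r. Qed.
Lemma sub_scaleDr : right_distributive sub_scale +%R.
Proof. by move=> a x y; apply: sval_inj; rewrite /= scalerDr. Qed.
Lemma sub_scaleDl v : {morph sub_scale^~ v: a b / a + b}.
Proof. by move=> a b; apply: sval_inj; rewrite /= scalerDl. Qed.

HB.instance Definition _ := GRing.Zmodule_isLmodule.Build R (subm S) sub_scaleA sub_scale1 sub_scaleDr sub_scaleDl.

Definition subm_t : lmodType R := subm S.

Lemma incl_lin : linear (fun x : subm S => proj1_sig x).
Proof. by []. Qed.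
Definition incl : {linear subm S -> V} := mkLin incl_lin.
Lemma incl_inj : injective incl.
Proof. exact: sval_inj. Qed.
Lemma inclE x : incl x = proj1_sig x. Proof. by []. Qed.
Lemma incl_in x : S (incl x). Proof. exact: proj2_sig x. Qed.
Definition inS (x : V) (h : S x) : subm S := exist _ x h.
Lemma incl_inS x h : incl (@inS x h) = x. Proof. by []. Qed.

End SubInst.

Section Prime.
Variable R : comNzRingType.
Implicit Types p : spec R.

Lemma pnot1 p : ~ pmem p 1.
Proof. by case: p => P [? ? ?]. Qed.
Lemma pmulP p a b : pmem p (a * b) -> pmem p a \/ pmem p b.
Proof. by case: p => P [? ? H]; apply: H. Qed.
Lemma pnmul p a b : ~ pmem p a -> ~ pmem p b -> ~ pmem p (a * b).
Proof. by move=> ha hb /pmulP []. Qed.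
Lemma pmemM p a b : pmem p b -> pmem p (a * b).
Proof. by case: p => P [[? ? H] ? ?]; apply: H. Qed.
End Prime.

Section Gamma.
Variable R : comNzRingType.
Variable Phi : spec R -> Prop.

Lemma gamma_lin (U V : lmodType R) (f : {linear U -> V}) (m : U) :
  in_Gamma Phi m -> in_Gamma Phi (f m).
Proof.
move=> hm p [x [[r ->]] hs]; apply: hm; exists (r *: m); split; first by exists r.
move=> s /hs; apply: contra_not => e; by rewrite scalerA -linearZ -scalerA e linear0.
Qed.

Lemma gamma_inj (U V : lmodType R) (f : {linear U -> V}) (m : U) :
  injective f -> in_Gamma Phi (f m) -> in_Gamma Phi m.
Proof.
move=> fi hm p [x [[r ->]] hs]; apply: hm; exists (r *: f m); split; first by exists r.
move=> s /hs; apply: contra_not => e; apply: fi; by rewrite !linearZ /= e linear0.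
Qed.

Lemma gamma0 (V : lmodType R) : in_Gamma Phi (0 : V).
Proof.
move=> p [x [[r ->]] hs]; exfalso; apply: (hs 1); first exact: pnot1.
by rewrite scaler0 scale1r.
Qed.

Lemma gammaZ (V : lmodType R) (r : R) (m : V) : in_Gamma Phi m -> in_Gamma Phi (r *: m).
Proof.
move=> hm p [x [[t ->]] hs]; apply: hm; exists ((t * r) *: m); split; first by exists (t * r).
by rewrite -scalerA.
Qed.

Lemma gammaD (V : lmodType R) (x y : V) :
  in_Gamma Phi x -> in_Gamma Phi y -> in_Gamma Phi (x + y).
Proof.
move=> hx hy p [z [[r ->]] hs].
case: (classic (forall s, ~ pmem p s -> s *: (r *: x) <> 0)) => [H1|H1].
  by apply: hx; exists (r *: x); split => //; exists r.
case: (classic (forall s, ~ pmem p s -> s *: (r *: y) <> 0)) => [H2|H2].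
  by apply: hy; exists (r *: y); split => //; exists r.
exfalso.
have [s1 hs1] : exists s, ~ (~ pmem p s -> s *: (r *: x) <> 0).
  by apply: not_all_ex_not.
have [s2 hs2] : exists s, ~ (~ pmem p s -> s *: (r *: y) <> 0).
  by apply: not_all_ex_not.
apply imply_to_and in hs1; apply imply_to_and in hs2.
case: hs1 => n1 /NNPP e1; case: hs2 => n2 /NNPP e2.
apply: (hs (s1 * s2)); first exact: pnmul.
rewrite !scalerDr.
have -> : (s1 * s2) *: (r *: x) = s2 *: (s1 *: (r *: x)) by rewrite [RHS]scalerA mulrC.
have -> : (s1 * s2) *: (r *: y) = s1 *: (s2 *: (r *: y)) by rewrite [RHS]scalerA.
by rewrite e1 e2 !scaler0 addr0.
Qed.

Lemma gammaN (V : lmodType R) (x : V) : in_Gamma Phi x -> in_Gamma Phi (- x).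
Proof. by move=> h; rewrite -scaleN1r; apply: gammaZ. Qed.

Definition GammaZero (V : lmodType R) := forall x : V, in_Gamma Phi x -> x = 0.

Hypothesis hPhi : specialization_closed Phi.

Lemma ass_gamma (V : lmodType R) p : Ass V p -> Phi p -> exists m : V, m <> 0 /\ in_Gamma Phi m.
Proof.
move=> [m hm] hp; exists m; split.
  move=> m0; apply: (@pnot1 _ p); apply/hm; by rewrite m0 scaler0.
move=> q [z [[r ->]] hs]; apply: (hPhi hp) => a /hm ham.
apply: NNPP => haq; apply: (hs a haq).
by rewrite scalerA mulrC -scalerA ham scaler0.
Qed.

Lemma gz_ass (V : lmodType R) : GammaZero V -> forall p, Ass V p -> ~ Phi p.
Proof. by move=> gz p ha hp; have [m [m0 hm]] := ass_gamma ha hp; apply: m0; apply: gz. Qed.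

Hypothesis hR : noetherian R.

Definition ann (V : lmodType R) (y : V) : R -> Prop := fun a => a *: y = 0.

Lemma ann_ideal (V : lmodType R) (y : V) : is_ideal (ann y).
Proof.
split; rewrite /ann; first by rewrite scale0r.
  by move=> a b ha hb; rewrite scalerDl ha hb addr0.
by move=> a b hb; rewrite -scalerA hb scaler0.
Qed.

Lemma gamma_ass (V : lmodType R) (x : V) :
  in_Gamma Phi x -> x <> 0 -> exists p, Ass V p /\ Phi p.
Proof.
move=> hx x0.
pose Y := fun y : V => (exists r, y = r *: x) /\ y <> 0.
have [y [Yy ymax]] : exists y, Y y /\ forall y', Y y' ->
    (forall a, ann y a -> ann y' a) -> forall a, ann y' a -> ann y a.
  apply: NNPP => H.
  have step : forall yy : {y | Y y}, exists yy' : {y | Y y},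
      (forall a, ann (proj1_sig yy) a -> ann (proj1_sig yy') a) /\
      ~ (forall a, ann (proj1_sig yy') a -> ann (proj1_sig yy) a).
    move=> [y Yy] /=; apply: NNPP => H2; apply: H; exists y; split => //.
    move=> y' Yy' h1; apply: NNPP => h2; apply: H2; by exists (exist _ y' Yy').
  have [nxt hnxt] : exists f : {y | Y y} -> {y | Y y}, forall yy,
      (forall a, ann (proj1_sig yy) a -> ann (proj1_sig (f yy)) a) /\
      ~ (forall a, ann (proj1_sig (f yy)) a -> ann (proj1_sig yy) a).
    exists (fun yy => proj1_sig (constructive_indefinite_description _ (step yy))).
    by move=> yy; case: constructive_indefinite_description.
  have Y0 : Y x by split => //; exists 1; rewrite scale1r.
  pose sq k := iter k nxt (exist _ x Y0).
  have [N hN] := hR (fun k => ann_ideal (proj1_sig (sq k))) (fun k => proj1 (hnxt (sq k))).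
  apply: (proj2 (hnxt (sq N))) => a ha; exact: (hN N.+1 a (leqnSn N) ha).
have pr : is_prime_ideal (ann y).
  split; first exact: ann_ideal.
    by rewrite /ann scale1r; case: Yy.
  move=> a b hab; case: (classic (ann y a)) => [|nay]; first by left.
  right; have Yay : Y (a *: y).
    split; last exact: nay.
    by case: Yy => [[r ->] _]; exists (a * r); rewrite scalerA.
  apply: (ymax _ Yay).
    by move=> c hc; rewrite /ann scalerA mulrC -scalerA hc scaler0.
  by rewrite /ann scalerA mulrC; exact: hab.
exists (exist _ (ann y) pr); split.
  by exists y => r.
have gy : in_Gamma Phi y by case: Yy => [[r ->] _]; apply: gammaZ.
apply: gy; exists y; split; first by exists 1; rewrite scale1r.
by move=> s hs; exact: hs.
Qed.

Lemma ass_gz (V : lmodType R) : (forall p, Ass V p -> ~ Phi p) -> GammaZero V.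
Proof.
move=> h x hx; apply: NNPP => x0.
by have [p [ha hp]] := gamma_ass hx x0; apply: (h p).
Qed.

End Gamma.

Section DepChoice.
Variables (X : nat -> Type) (B0 : X 0%N -> Prop) (Q : forall j, X j -> Prop)
  (S : forall j, X j -> X j.+1 -> Prop).
Hypothesis H0 : exists x0, B0 x0 /\ @Q 0%N x0.
Hypothesis Hs : forall j x, @Q j x -> exists y, @S j x y /\ @Q j.+1 y.

Let x0 := constructive_indefinite_description _ H0.
Let stp j (x : {x | @Q j x}) : {y | @S j (proj1_sig x) y /\ @Q j.+1 y} :=
  constructive_indefinite_description _ (Hs (proj2_sig x)).
Fixpoint dc_g j : {x : X j | @Q j x} :=
  match j with
  | O => exist _ (proj1_sig x0) (proj2 (proj2_sig x0))
  | j'.+1 => exist _ (proj1_sig (stp (dc_g j'))) (proj2 (proj2_sig (stp (dc_g j'))))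
  end.

Lemma dep_choice : exists f : forall j, X j,
  B0 (f 0%N) /\ (forall j, @Q j (f j)) /\ (forall j, @S j (f j) (f j.+1)).
Proof.
exists (fun j => proj1_sig (dc_g j)); split; first exact: (proj1 (proj2_sig x0)).
split; first by move=> j; exact: (proj2_sig (dc_g j)).
move=> j /=; exact: (proj1 (proj2_sig (stp (dc_g j)))).
Qed.
End DepChoice.

Section Lin.
Variable R : comNzRingType.

Lemma lcomp_lin (U V W : lmodType R) (g : {linear V -> W}) (f : {linear U -> V}) :
  linear (fun x => g (f x)).
Proof. by move=> a x y; rewrite !linearP. Qed.
Definition lcomp U V W g f := mkLin (@lcomp_lin U V W g f).

Lemma lsub_lin (U V : lmodType R) (g f : {linear U -> V}) : linear (fun x => g x - f x).
Proof. move=> a x y /=; rewrite [g _]linearP [f _]linearP scalerBr opprD addrACA //. Qed.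
Definition lsub U V g f := mkLin (@lsub_lin U V g f).

Lemma lid_lin (U : lmodType R) : linear (fun x : U => x).
Proof. by []. Qed.
Definition lid U := mkLin (@lid_lin U).

Section Img.
Variables (X Y : lmodType R) (d : {linear X -> Y}).
Definition imS : submod Y.
refine (@Submod R Y (fun y => exists x, d x = y) _ _ _).
- by exists 0; rewrite linear0.
- by move=> _ _ [x <-] [y <-]; exists (x + y); rewrite linearD.
- by move=> r _ [x <-]; exists (r *: x); rewrite linearZ.
Defined.
Definition kerS : submod X.
refine (@Submod R X (fun x => d x = 0) _ _ _).
- by rewrite linear0.
- by move=> x y hx hy; rewrite linearD hx hy addr0.
- by move=> r x hx; rewrite linearZ_LR hx scaler0.
Defined.
End Img.

Lemma factor_ext (X Y N : lmodType R) (d : {linear X -> Y}) (phi : {linear X -> N}) :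
  injective_module N -> (forall x, d x = 0 -> phi x = 0) ->
  exists psi : {linear Y -> N}, forall x, psi (d x) = phi x.
Proof.
move=> iN hk.
pose pre (y : subm (imS d)) : X := proj1_sig (constructive_indefinite_description _ (proj2_sig y)).
have preP y : d (pre y) = proj1_sig y.
  by rewrite /pre; case: constructive_indefinite_description.
have same x1 x2 : d x1 = d x2 -> phi x1 = phi x2.
  move=> e; apply/eqP; rewrite -subr_eq0 -linearB; apply/eqP/hk.
  by rewrite linearB e subrr.
have glin : linear (fun y : subm (imS d) => phi (pre y)).
  move=> a u v; rewrite -linearP; apply: same.
  by rewrite linearP !preP.
have [h hh] := iN _ _ (incl (imS d)) (mkLin glin) (@incl_inj _ _ (imS d)).
exists h => x.
have hx : (imS d) (d x) by exists x.
have := hh (inS hx); rewrite incl_inS => ->; rewrite mkLinE.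
apply: same; by rewrite preP.
Qed.
End Lin.

Section Comparison.
Variable R : comNzRingType.
Variable Phi : spec R -> Prop.

Section Res.
Variables (M : lmodType R) (I : nat -> lmodType R) (d : forall i, {linear I i -> I i.+1})
  (eps : {linear M -> I 0%N}).
Hypothesis res : inj_resolution d eps.
Lemma res_dd j x : d j.+1 (d j x) = 0.
Proof. by case: res => _ _ h _; apply/h; exists x. Qed.
Lemma res_de m : d 0%N (eps m) = 0.
Proof. by case: res => _ h _ _; apply/h; exists m. Qed.
Lemma res_ker0 x : d 0%N x = 0 -> exists m, eps m = x.
Proof. by case: res => _ h _ _; move/h. Qed.
Lemma res_kerS j x : d j.+1 x = 0 -> exists y, d j y = x.
Proof. by case: res => _ _ h _; move/h. Qed.
Lemma res_inj j : injective_module (I j).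
Proof. by case: res. Qed.
Lemma res_eps_inj : injective eps.
Proof. by case: res. Qed.
End Res.

Lemma chain_map (M : lmodType R) (I I' : nat -> lmodType R)
  (d : forall i, {linear I i -> I i.+1}) (d' : forall i, {linear I' i -> I' i.+1})
  (eps : {linear M -> I 0%N}) (eps' : {linear M -> I' 0%N}) :
  inj_resolution d eps -> inj_resolution d' eps' ->
  exists f : forall j, {linear I j -> I' j},
    (forall m, f 0%N (eps m) = eps' m) /\ (forall j x, f j.+1 (d j x) = d' j (f j x)).
Proof.
move=> r r'.
have [||f [B [_ S]]] := @dep_choice (fun j => {linear I j -> I' j})
  (fun f => forall m, f (eps m) = eps' m)
  (fun j f => forall x, d j x = 0 -> d' j (f x) = 0)
  (fun j f f' => forall x, f' (d j x) = d' j (f x)) _ _.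
- have [f0 hf0] := @res_inj _ _ _ _ r' 0%N _ _ eps eps' (res_eps_inj r).
  exists f0; split => // x /(res_ker0 r) [m <-]; rewrite hf0; by have := res_de r' m.
- move=> j f hf.
  have [g hg] := factor_ext (d:=d j) (phi:=lcomp (d' j) f) ((@res_inj _ _ _ _ r' j.+1)) hf.
  exists g; split => // x /(res_kerS r) [y <-]; by rewrite hg /= (res_dd r').
- by exists f.
Qed.

Lemma homotopy (M : lmodType R) (I : nat -> lmodType R)
  (d : forall i, {linear I i -> I i.+1}) (eps : {linear M -> I 0%N})
  (k : forall j, {linear I j -> I j}) :
  inj_resolution d eps ->
  (forall m, k 0%N (eps m) = 0) -> (forall j x, k j.+1 (d j x) = d j (k j x)) ->
  exists H : forall j, {linear I j.+1 -> I j},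
    (forall x, H 0%N (d 0%N x) = k 0%N x) /\
    (forall j x, H j.+1 (d j.+1 x) = k j.+1 x - d j (H j x)).
Proof.
move=> r k0 kc.
have [||H [B [_ S]]] := @dep_choice (fun j => {linear I j.+1 -> I j})
  (fun h => forall x, h (d 0%N x) = k 0%N x)
  (fun j h => forall x, d j.+1 x = 0 -> k j.+1 x - d j (h x) = 0)
  (fun j h h' => forall x, h' (d j.+1 x) = k j.+1 x - d j (h x)) _ _.
- have [h hh] : exists h : {linear I 1 -> I 0%N}, forall x, h (d 0%N x) = k 0%N x.
    apply: factor_ext; first exact: (@res_inj _ _ _ _ r 0%N).
    by move=> x /(res_ker0 r) [m <-]; apply: k0.
  exists h; split => // x /(res_kerS r) [y <-].
  by rewrite hh kc subrr.
- move=> j h hh.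
  have [g hg] := factor_ext (d:=d j.+1) (phi:=lsub (k j.+1) (lcomp (d j) h)) ((@res_inj _ _ _ _ r j.+1)) hh.
  exists g; split => // x /(res_kerS r) [y <-].
  rewrite hg /= kc linearB (res_dd r) subr0 subrr //.
- by exists H.
Qed.

Lemma transfer (M : lmodType R) (I I' : nat -> lmodType R)
  (d : forall i, {linear I i -> I i.+1}) (d' : forall i, {linear I' i -> I' i.+1})
  (eps : {linear M -> I 0%N}) (eps' : {linear M -> I' 0%N}) i :
  inj_resolution d eps -> inj_resolution d' eps' ->
  Gamma_coh_zero Phi d' i -> Gamma_coh_zero Phi d i.
Proof.
move=> r r' hc.
have [f [f0 fc]] := chain_map r r'.
have [g [g0 gc]] := chain_map r' r.
pose k j := lsub (lid (I j)) (lcomp (g j) (f j)).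
have [||H [H0 HS]] := @homotopy M I d eps k r _ _.
- by move=> m; rewrite /k /= f0 g0 subrr.
- by move=> j x; rewrite /k /= fc gc linearB.
case: i hc => [|j] /= hc.
  move=> x gx dx.
  have fx0 : f 0%N x = 0.
    apply: hc; first exact: gamma_lin.
    by rewrite -fc dx linear0.
  have := H0 x; rewrite dx linear0 /k /= fx0 linear0 subr0 => <-.
  by [].
move=> x gx dx.
have [y' [gy' ey']] : exists y', in_Gamma Phi y' /\ d' j y' = f j.+1 x.
  apply: hc; first exact: gamma_lin.
  by rewrite -fc dx linear0.
exists (H j x + g j y'); split.
  by apply: gammaD; apply: gamma_lin.
have e : x - g j.+1 (f j.+1 x) == d j (H j x).
  by have := HS j x; rewrite dx linear0 /k /= => /eqP; rewrite eq_sym subr_eq0.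
rewrite subr_eq in e.
by rewrite linearD -gc ey' [RHS](eqP e).
Qed.

Lemma Hz_of_res (M : lmodType R) (I : nat -> lmodType R)
  (d : forall i, {linear I i -> I i.+1}) (eps : {linear M -> I 0%N}) i :
  inj_resolution d eps -> Gamma_coh_zero Phi d i -> H_Phi_zero Phi M i.
Proof. by move=> r h I' d' eps' r'; apply: (transfer r' r). Qed.

End Comparison.

Section Splice.
Variable R : comNzRingType.
Variable Phi : spec R -> Prop.

Lemma gz_H0 (M : lmodType R) : GammaZero Phi M -> H_Phi_zero Phi M 0.
Proof.
move=> gz I d eps r x gx /(res_ker0 r) [m em]; subst x.
have gm : in_Gamma Phi m by apply: (gamma_inj (f:=eps)) => //; exact: res_eps_inj r.
by rewrite (gz m gm) linear0.
Qed.

Lemma H0_gz (M : lmodType R) (I : nat -> lmodType R)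
  (d : forall i, {linear I i -> I i.+1}) (eps : {linear M -> I 0%N}) :
  inj_resolution d eps -> H_Phi_zero Phi M 0 -> GammaZero Phi M.
Proof.
move=> r h x gx; apply: (res_eps_inj r); rewrite linear0.
apply: (h _ _ _ r); first exact: gamma_lin.
by rewrite (res_de r).
Qed.

Variables (A E B : lmodType R) (al : {linear A -> E}) (be : {linear E -> B}).
Hypothesis hal : injective al.
Hypothesis hbe : forall b, exists e, be e = b.
Hypothesis hex : forall e, be e = 0 <-> exists a, al a = e.
Hypothesis hE : injective_module E.
Hypothesis gE : GammaZero Phi E.

Section S.
Variables (IB : nat -> lmodType R) (dB : forall i, {linear IB i -> IB i.+1})
  (epsB : {linear B -> IB 0%N}).
Hypothesis rB : inj_resolution dB epsB.

Definition sI (j : nat) : lmodType R := match j with O => E | j'.+1 => IB j' end.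
Definition sd (j : nat) : {linear sI j -> sI j.+1} :=
  match j return {linear sI j -> sI j.+1} with
  | O => lcomp epsB be
  | j'.+1 => dB j'
  end.

Lemma splice_res : inj_resolution sd al.
Proof.
split => //.
- move=> x /=; rewrite -hex; split => [h|->]; last by rewrite linear0.
  by apply: (res_eps_inj rB); rewrite linear0.
- case=> [|i] x /=.
    split => [/(res_ker0 rB) [b <-]|[y <-]]; last by rewrite (res_de rB).
    by have [e <-] := hbe b; exists e.
  split => [/(res_kerS rB) //|[y <-]]; by rewrite (res_dd rB).
- case=> [|j] //=; exact: (@res_inj _ _ _ _ _ rB j).
Qed.

Lemma splice_coh i : Gamma_coh_zero Phi sd i.+1 <-> Gamma_coh_zero Phi dB i.
Proof.
case: i => [|i] //=.
split => h x gx dx.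
  have [y [gy <-]] := h x gx dx; by rewrite (gE gy) !linear0.
by exists 0; split; [exact: gamma0 | rewrite (h x gx dx) !linear0].
Qed.
End S.

Lemma S2 i : H_Phi_zero Phi A i.+1 -> H_Phi_zero Phi B i.
Proof.
move=> h IB dB epsB rB; apply/(splice_coh dB epsB); exact: h _ _ _ (splice_res rB).
Qed.

Lemma S1 i : (exists (IB : nat -> lmodType R) (dB : forall i, {linear IB i -> IB i.+1})
  (epsB : {linear B -> IB 0%N}), inj_resolution dB epsB) ->
  H_Phi_zero Phi B i -> H_Phi_zero Phi A i.+1.
Proof.
move=> [IB [dB [epsB rB]]] h.
apply: (Hz_of_res (splice_res rB)); apply/(splice_coh dB epsB); exact: h _ _ _ rB.
Qed.

End Splice.

Definition frac (x : rat) : rat := x - (Num.floor x)%:~R.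

Lemma frac_int (x : rat) : x - frac x = (Num.floor x)%:~R.
Proof. by rewrite /frac opprB addrC subrK. Qed.

Lemma frac_itv x : 0 <= frac x < 1.
Proof.
have /andP [h1 h2] := floor_itv x.
by rewrite /frac subr_ge0 h1 /= ltrBlDr addrC -[1]/(1%:~R) -intrD.
Qed.

Lemma fracDz (x : rat) (k : int) : frac (x + k%:~R) = frac x.
Proof.
rewrite /frac floorDrz ?intr_int // intrKfloor intrD.
by rewrite opprD addrACA subrr addr0.
Qed.

Lemma frac_id x : 0 <= x < 1 -> frac x = x.
Proof.
move=> h; rewrite /frac (@floor_def _ x 0) ?subr0 // add0r //.
Qed.

Lemma fracK x : frac (frac x) = frac x.
Proof. exact: frac_id (frac_itv x). Qed.

Lemma fracDl x y : frac (frac x + y) = frac (x + y).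
Proof.
have -> : frac x + y = (x + y) + (- Num.floor x)%:~R.
  by rewrite /frac intrN addrAC.
exact: fracDz.
Qed.

Lemma fracDr x y : frac (x + frac y) = frac (x + y).
Proof. by rewrite addrC fracDl addrC. Qed.

Lemma frac0 : frac 0 = 0.
Proof. by rewrite frac_id // lexx ltr01. Qed.

Lemma frac_eq0 x : frac x = 0 -> x = (Num.floor x)%:~R.
Proof. by rewrite /frac => /eqP; rewrite subr_eq0 => /eqP. Qed.

Definition qz := {x : rat | frac x == x}.

HB.instance Definition _ := boolp.gen_eqMixin qz.
HB.instance Definition _ := boolp.gen_choiceMixin qz.

Lemma qz_inj : injective (fun x : qz => proj1_sig x).
Proof. move=> [x hx] [y hy] /= exy; subst y; by rewrite (proof_irrelevance _ hx hy). Qed.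

Definition qpi (x : rat) : qz := exist _ (frac x) (introT eqP (fracK x)).
Definition qz0 : qz := qpi 0.
Definition qzadd (x y : qz) : qz := qpi (proj1_sig x + proj1_sig y).
Definition qzopp (x : qz) : qz := qpi (- proj1_sig x).

Lemma qzval (x : qz) : frac (proj1_sig x) = proj1_sig x.
Proof. by case: x => x /= /eqP. Qed.

Lemma qzaddA : associative qzadd.
Proof. by move=> x y z; apply: qz_inj; rewrite /= fracDl fracDr addrA. Qed.
Lemma qzaddC : commutative qzadd.
Proof. by move=> x y; apply: qz_inj; rewrite /= addrC. Qed.
Lemma qzadd0 : left_id qz0 qzadd.
Proof. by move=> x; apply: qz_inj; rewrite /= frac0 add0r qzval. Qed.
Lemma qzaddN : left_inverse qz0 qzopp qzadd.
Proof. by move=> x; apply: qz_inj; rewrite /= fracDl addNr. Qed.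

HB.instance Definition _ := GRing.isZmodule.Build qz qzaddA qzaddC qzadd0 qzaddN.

Lemma qpi_add : {morph qpi : x y / x + y}.
Proof. by move=> x y; apply: qz_inj; rewrite /= fracDl fracDr. Qed.

Lemma qpi_zmod : zmod_morphism qpi.
Proof.
move=> x y; rewrite qpi_add; congr (_ + _).
apply: qz_inj => /=.
have -> : - frac y = - y + (Num.floor y)%:~R by rewrite /frac opprB addrC.
by rewrite fracDz.
Qed.

HB.instance Definition _ := GRing.isZmodMorphism.Build rat qz qpi qpi_zmod.

Lemma qpiMz x (k : int) : qpi (x *~ k) = qpi x *~ k.
Proof. exact: (raddfMz qpi). Qed.

Lemma qpi_val (t : qz) : qpi (proj1_sig t) = t.
Proof. by apply: qz_inj; rewrite /= qzval. Qed.

Lemma qpi_int (k : int) : qpi k%:~R = 0.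
Proof. by apply: qz_inj; rewrite /= -[k%:~R]add0r fracDz frac0. Qed.

Lemma qpi_eq0 x : qpi x = 0 -> x = (Num.floor x)%:~R.
Proof. move=> /(congr1 (fun t : qz => proj1_sig t)) /=; rewrite frac0; exact: frac_eq0. Qed.

Lemma qz_div (t : qz) (n : nat) : (0 < n)%N -> exists u : qz, u *~ n = t.
Proof.
move=> n0; exists (qpi (proj1_sig t / n%:R)).
rewrite -qpiMz -mulrzr -[(n:int)%:~R]/(n%:R) mulfVK; first exact: qpi_val.
by rewrite pnatr_eq0 -lt0n.
Qed.

Lemma floor_unit (x : rat) : 0 < x < 1 -> Num.floor x = 0.
Proof.
move=> /andP [h1 h2]; apply: floor_def.
by rewrite add0r mulr0z mulr1z (ltW h1) h2.
Qed.

Lemma qpi_unit_neq0 (x : rat) : 0 < x < 1 -> qpi x <> 0.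
Proof.
move=> hx /qpi_eq0; rewrite floor_unit // mulr0z => h.
by move: hx; rewrite h ltxx.
Qed.

Lemma qz_sep (n : nat) : (1 < n)%N -> exists u : qz, u *~ n = 0 /\ u <> 0.
Proof.
move=> n1; have n0 : (n%:R : rat) != 0 by rewrite pnatr_eq0 -lt0n ltnW.
exists (qpi (n%:R)^-1); split.
  by rewrite -qpiMz -mulrzr -[(n:int)%:~R]/(n%:R) (mulVf n0) -(mulr1z 1) qpi_int.
apply: qpi_unit_neq0.
rewrite invr_gt0 ltr0n (ltnW n1) invf_lt1 ?ltr0n ?(ltnW n1) // ltr1n //.
Qed.

Lemma qz_half : qpi (2%:R^-1) <> 0.
Proof.
apply: qpi_unit_neq0.
by rewrite invr_gt0 ltr0n invf_lt1 ?ltr0n // ltr1n.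
Qed.

Lemma zorn_max (T : Type) (P : (T -> Prop) -> Prop) :
  (forall F : (T -> Prop) -> Prop, (forall X, F X -> P X) ->
     (forall X Y, F X -> F Y -> (forall t, X t -> Y t) \/ (forall t, Y t -> X t)) ->
     P (fun t => exists2 X, F X & X t)) ->
  exists A, P A /\ forall B, (forall t, A t -> B t) -> P B -> forall t, B t -> A t.
Proof.
move=> h.
have [A [PA Amax]] := @classical_sets.Zorn_bigcup T P (fun F FP Ftot => h F FP Ftot).
exists A; split => // B AB PB t Bt.
apply: NNPP => nAt; apply: (Amax B) => //; split => //.
by move=> /(_ t Bt).
Qed.

Section Graph.
Variable B : zmodType.
Implicit Types G : B -> qz -> Prop.

Definition gsub G := G 0 0 /\ forall x t y u, G x t -> G y u -> G (x - y) (t - u).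
Definition gfun G := forall t, G 0 t -> t = 0.

Lemma gN G x t : gsub G -> G x t -> G (- x) (- t).
Proof. by move=> [h0 hB] h; have := hB _ _ _ _ h0 h; rewrite !sub0r. Qed.
Lemma gD G x t y u : gsub G -> G x t -> G y u -> G (x + y) (t + u).
Proof. by move=> gs hx hy; have := (proj2 gs) _ _ _ _ hx (gN gs hy); rewrite !opprK. Qed.
Lemma gMn G x t n : gsub G -> G x t -> G (x *+ n) (t *+ n).
Proof. move=> gs h; elim: n => [|n ih]; first by rewrite !mulr0n; case: gs. by rewrite !mulrS; apply: gD. Qed.
Lemma gMz G x t k : gsub G -> G x t -> G (x *~ k) (t *~ k).
Proof.
move=> gs h; case: k => n; first by rewrite -!pmulrn; apply: gMn.
by rewrite NegzE !mulrNz -!pmulrn; apply: gN => //; apply: gMn.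
Qed.
Lemma guniq G x t u : gsub G -> gfun G -> G x t -> G x u -> t = u.
Proof. by move=> gs gf h1 h2; apply/eqP; rewrite -subr_eq0; apply/eqP/gf; rewrite -(subrr x); apply: (proj2 gs). Qed.

Lemma d_analysis G b : gsub G -> gfun G ->
  (forall k t, G (b *~ k) t -> k = 0) \/
  exists n : nat, [/\ (0 < n)%N, (exists t, G (b *~ n%:Z) t) &
     forall k t, G (b *~ k) t -> (n%:Z %| k)%Z].
Proof.
move=> gs gf.
case: (classic (exists k t, G (b *~ k) t /\ k != 0)) => [[k [t [hk k0]]]|hn]; last first.
  left => k t h; apply: NNPP => k0; apply: hn; exists k, t; split => //; exact/eqP.
right.
pose P n := (0 < n)%N && boolp.asbool (exists t, G (b *~ n%:Z) t).
have exP : exists n, P n.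
  exists `|k|%N; apply/andP; split; first by rewrite absz_gt0.
  apply/boolp.asboolP; case: (lerP 0 k) => hk0.
    by exists t; rewrite gez0_abs.
  by exists (- t); rewrite ltz0_abs // mulrNz; apply: gN.
pose n := ex_minn exP.
have [Pn nmin] : P n /\ forall m, P m -> (n <= m)%N.
  by rewrite /n; case: ex_minnP => m hm hmin; split.
move: Pn => /andP [n0 /boolp.asboolP [tn htn]].
exists n; split => // [|k' t' h']; first by exists tn.
apply/dvdz_mod0P; set r := (k' %% n)%Z.
have r0 : 0 <= r by apply: modz_ge0; rewrite eqz_nat -lt0n.
have rn : r < n%:Z by apply: ltz_pmod; rewrite ltz_nat.
have hr : G (b *~ r) (t' - tn *~ (k' %/ n)%Z).
  have -> : b *~ r = b *~ k' - (b *~ n) *~ (k' %/ n)%Z.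
    rewrite -mulrzA -mulrzBr; congr (_ *~ _).
    by rewrite /r {2}(divz_eq k' n) mulrC addrAC subrr add0r.
  by apply: (proj2 gs) => //; apply: gMz.
apply: NNPP => rne0.
have Pr : P `|r|%N.
  apply/andP; split; first by rewrite absz_gt0; apply/eqP.
  by apply/boolp.asboolP; exists (t' - tn *~ (k' %/ n)%Z); rewrite (gez0_abs r0).
have := nmin _ Pr; rewrite -lez_nat gez0_abs // => hle.
by move: rn; rewrite ltNge hle.
Qed.

Lemma tau_exists G b : gsub G -> gfun G ->
  exists tau : qz, forall k t, G (b *~ k) t -> t = tau *~ k.
Proof.
move=> gs gf.
case: (d_analysis b gs gf) => [hn|[n [n0 [tn htn] hdiv]]].
  exists 0 => k t h; rewrite mul0rz.
  by have k0 := hn k t h; move: h; rewrite k0 mulr0z; apply: gf.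
have [u hu] := qz_div tn n0.
exists u => k' t' h'.
have [q hq] := dvdzP (hdiv _ _ h'); rewrite hq in h' *.
have e : G (b *~ (q * n)) (tn *~ q) by rewrite mulrC mulrzA; apply: gMz.
by rewrite (guniq gs gf h' e) -hu -mulrzA mulrC.
Qed.

Definition gext G b (tau : qz) : B -> qz -> Prop :=
  fun x t => exists y u k, G y u /\ x = y + b *~ k /\ t = u + tau *~ k.

Lemma gext_sub G b tau : gsub G -> gsub (gext G b tau).
Proof.
move=> gs; split.
  by exists 0, 0, 0; rewrite !mulr0z !addr0; split => //; case: gs.
move=> x t y u [y1 [u1 [k1 [h1 [-> ->]]]]] [y2 [u2 [k2 [h2 [-> ->]]]]].
exists (y1 - y2), (u1 - u2), (k1 - k2); split; first by apply: (proj2 gs).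
by rewrite !mulrzBr !opprD !addrA; split; congr (_ + _); rewrite addrAC.
Qed.

Lemma gext_fun G b tau : gsub G -> gfun G ->
  (forall k t, G (b *~ k) t -> t = tau *~ k) -> gfun (gext G b tau).
Proof.
move=> gs gf ht t [y [u [k [h [e ->]]]]].
have ey : b *~ k = - y by apply/eqP; rewrite -addr_eq0 addrC -e.
have := ht k (- u); rewrite ey => /(_ (gN gs h)) <-.
by rewrite subrr.
Qed.

Lemma gext_in G b tau x t : G x t -> gext G b tau x t.
Proof. by move=> h; exists x, t, 0; rewrite !mulr0z !addr0. Qed.

Lemma gext_b G b tau : gsub G -> gext G b tau b tau.
Proof. by move=> gs; exists 0, 0, 1; rewrite !mulr1z !add0r; split => //; case: gs. Qed.

Lemma graph_extend (G0 : B -> qz -> Prop) : gsub G0 -> gfun G0 ->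
  exists h : B -> qz, (forall x y, h (x - y) = h x - h y) /\ forall x t, G0 x t -> h x = t.
Proof.
move=> g0s g0f.
pose P (X : B * qz -> Prop) := (forall p, ~ X p) \/
  (gsub (fun x t => X (x, t)) /\ gfun (fun x t => X (x, t)) /\ forall x t, G0 x t -> X (x, t)).
have Pr X p : P X -> X p -> gsub (fun x t => X (x, t)) /\ gfun (fun x t => X (x, t)) /\
    forall x t, G0 x t -> X (x, t).
  by case=> [h /h|h] //.
have [|A [PA Amax]] := @zorn_max (B * qz)%type P.
  move=> F FP Ftot.
  case: (classic (exists X, F X /\ exists p, X p)) => [[X0 [FX0 [p0 X0p0]]]|hne]; last first.
    left => p [X FX Xp]; apply: hne; exists X; split => //; by exists p.
  have [[s0 _] [_ g0X0]] := Pr _ _ (FP _ FX0) X0p0.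
  right; split; [split|split].
  - by exists X0.
  - move=> x t y u [X1 FX1 h1] [X2 FX2 h2].
    have [[_ s1] _] := Pr _ _ (FP _ FX1) h1.
    have [[_ s2] _] := Pr _ _ (FP _ FX2) h2.
    case: (Ftot _ _ FX1 FX2) => sub.
      by exists X2 => //; apply: s2 => //; apply: sub.
    by exists X1 => //; apply: s1 => //; apply: sub.
  - by move=> t [X FX h]; have [_ [f1 _]] := Pr _ _ (FP _ FX) h; apply: f1.
  - by move=> x t h; exists X0 => //; apply: g0X0.
have [[sA0 sA] [fA gA]] : gsub (fun x t => A (x, t)) /\ gfun (fun x t => A (x, t)) /\
    forall x t, G0 x t -> A (x, t).
  case: PA => [hA|//]; exfalso.
  have PB : P (fun p => G0 p.1 p.2) by right; split.
  apply: (hA (0, 0)); apply: (Amax _ (fun p => False_ind _ \o hA p) PB (0, 0)).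
  by case: g0s.
have gsA : gsub (fun x t => A (x, t)) by split.
have tot : forall b, exists t, A (b, t).
  move=> b; apply: NNPP => nb.
  have [tau htau] := tau_exists b gsA fA.
  pose A' := fun p : B * qz => gext (fun x t => A (x, t)) b tau p.1 p.2.
  have PA' : P A'.
    right; split; first exact: gext_sub.
    split; first exact: gext_fun.
    by move=> x t h; apply: gext_in; apply: gA.
  have hAA' : forall p, A p -> A' p by move=> [x t] h; apply: gext_in.
  apply: nb; exists tau; apply: (Amax _ hAA' PA' (b, tau)).
  exact: gext_b.
pose h b := proj1_sig (constructive_indefinite_description _ (tot b)).
have hP b : A (b, h b) by rewrite /h; case: constructive_indefinite_description.
exists h; split.
  move=> x y; apply: (guniq gsA fA (hP (x - y))); exact: sA (hP x) (hP y).
by move=> x t h0; apply: (guniq gsA fA (hP x)); apply: gA.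
Qed.

End Graph.

Section Subadd.
Variables (U : zmodType) (f : U -> qz).
Hypothesis hf : forall x y, f (x - y) = f x - f y.
Lemma sa0 : f 0 = 0. Proof. by rewrite -[X in f X](subrr 0) hf subrr. Qed.
Lemma saN x : f (- x) = - f x. Proof. by rewrite -sub0r hf sa0 sub0r. Qed.
Lemma saD x y : f (x + y) = f x + f y. Proof. by rewrite -{1}[y]opprK hf saN opprK. Qed.
Lemma saMz x k : f (x *~ k) = f x *~ k.
Proof.
have hn n : f (x *+ n) = f x *+ n.
  by elim: n => [|n ih]; rewrite ?mulr0n ?sa0 // !mulrS saD ih.
by case: k => n; rewrite -?pmulrn ?NegzE ?mulrNz -?pmulrn ?saN hn.
Qed.
End Subadd.

Section Jcons.
Variable R : comNzRingType.
Variable M : lmodType R.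
Variable C : submod M.

Definition Hom := {phi : M -> qz | (forall x y, phi (x - y) = phi x - phi y) /\ (forall c, C c -> phi c = 0)}.
Definition Jt := {F : Hom -> R -> qz | forall phi a b, F phi (a - b) = F phi a - F phi b}.

HB.instance Definition _ := boolp.gen_eqMixin Jt.
HB.instance Definition _ := boolp.gen_choiceMixin Jt.

Lemma Jt_inj (F G : Jt) : (forall phi a, proj1_sig F phi a = proj1_sig G phi a) -> F = G.
Proof.
case: F => F hF; case: G => G hG /= e.
have eFG : F = G by apply: functional_extensionality => phi; apply: functional_extensionality => a; apply: e.
subst G; by rewrite (proof_irrelevance _ hF hG).
Qed.

Definition Jval (F : Jt) := proj1_sig F.
Lemma Jsub (F : Jt) phi a b : Jval F phi (a - b) = Jval F phi a - Jval F phi b.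
Proof. by case: F => F hF; apply: hF. Qed.

Definition J0 : Jt. refine (exist _ (fun _ _ => 0) _). by move=> *; rewrite subrr. Defined.
Lemma Jadd_proof (F G : Jt) : forall phi a b,
  (fun phi a => Jval F phi a + Jval G phi a) phi (a - b) =
  (fun phi a => Jval F phi a + Jval G phi a) phi a - (fun phi a => Jval F phi a + Jval G phi a) phi b.
Proof. by move=> phi a b /=; rewrite !Jsub opprD addrACA. Qed.
Definition Jadd (F G : Jt) : Jt := exist _ _ (Jadd_proof F G).
Lemma Jopp_proof (F : Jt) : forall phi a b,
  (fun phi a => - Jval F phi a) phi (a - b) =
  (fun phi a => - Jval F phi a) phi a - (fun phi a => - Jval F phi a) phi b.
Proof. by move=> phi a b /=; rewrite !Jsub opprB opprK addrC. Qed.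
Definition Jopp (F : Jt) : Jt := exist _ _ (Jopp_proof F).

Lemma JaddA : associative Jadd.
Proof. by move=> x y z; apply: Jt_inj => phi a /=; rewrite addrA. Qed.
Lemma JaddC : commutative Jadd.
Proof. by move=> x y; apply: Jt_inj => phi a /=; rewrite addrC. Qed.
Lemma Jadd0 : left_id J0 Jadd.
Proof. by move=> x; apply: Jt_inj => phi a /=; rewrite add0r. Qed.
Lemma JaddN : left_inverse J0 Jopp Jadd.
Proof. by move=> x; apply: Jt_inj => phi a /=; rewrite addNr. Qed.

HB.instance Definition _ := GRing.isZmodule.Build Jt JaddA JaddC Jadd0 JaddN.

Lemma Jscale_proof (r : R) (F : Jt) : forall phi a b,
  (fun phi a => Jval F phi (a * r)) phi (a - b) =
  (fun phi a => Jval F phi (a * r)) phi a - (fun phi a => Jval F phi (a * r)) phi b.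
Proof. by move=> phi a b /=; rewrite mulrBl Jsub. Qed.
Definition Jscale (r : R) (F : Jt) : Jt := exist _ _ (Jscale_proof r F).

Lemma JsaD (F : Jt) phi a b : Jval F phi (a + b) = Jval F phi a + Jval F phi b.
Proof. exact: (saD (f := Jval F phi) (Jsub F phi)). Qed.

Lemma JscaleA a b (v : Jt) : Jscale a (Jscale b v) = Jscale (a * b) v.
Proof. by apply: Jt_inj => phi s /=; rewrite mulrA. Qed.
Lemma Jscale1 : left_id 1 Jscale.
Proof. by move=> x; apply: Jt_inj => phi s /=; rewrite mulr1. Qed.
Lemma JscaleDr : right_distributive Jscale +%R.
Proof. by move=> a x y; apply: Jt_inj. Qed.
Lemma JscaleDl v : {morph Jscale^~ v: a b / a + b}.
Proof. by move=> a b; apply: Jt_inj => phi s /=; rewrite mulrDr JsaD. Qed.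

HB.instance Definition _ := GRing.Zmodule_isLmodule.Build R Jt JscaleA Jscale1 JscaleDr JscaleDl.

Definition Jmod : lmodType R := Jt.

Lemma JvalD (F G : Jt) phi a : Jval (F + G) phi a = Jval F phi a + Jval G phi a. Proof. by []. Qed.
Lemma JvalN (F : Jt) phi a : Jval (- F) phi a = - Jval F phi a. Proof. by []. Qed.
Lemma JvalZ r (F : Jt) phi a : Jval (r *: F) phi a = Jval F phi (a * r). Proof. by []. Qed.
Lemma Jval0 phi a : Jval (0 : Jt) phi a = 0. Proof. by []. Qed.

Definition hsub (phi : Hom) := proj1 (proj2_sig phi).
Definition hC (phi : Hom) := proj2 (proj2_sig phi).

Lemma qmap_proof (m : M) : forall (phi : Hom) a b,
  (fun (phi : Hom) a => proj1_sig phi (a *: m)) phi (a - b) =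
  (fun (phi : Hom) a => proj1_sig phi (a *: m)) phi a - (fun (phi : Hom) a => proj1_sig phi (a *: m)) phi b.
Proof. by move=> phi a b /=; rewrite scalerBl hsub. Qed.
Definition qmap (m : M) : Jt := exist _ _ (qmap_proof m).

Lemma qmap_lin : linear qmap.
Proof.
move=> r x y; apply: Jt_inj => phi a /=.
rewrite scalerDr (saD (hsub phi)) scalerA.
by congr (_ + _).
Qed.
Definition qlin : {linear M -> Jmod} := mkLin qmap_lin.

End Jcons.

Section EI.
Variable R : comNzRingType.

Lemma sep_exists (M : lmodType R) (C : submod M) (m : M) :
  ~ C m -> exists phi : Hom C, proj1_sig phi m <> 0.
Proof.
move=> nCm.
pose G := fun (x : M) (t : qz) => C x /\ t = 0.
have gs : gsub G.
  split; first by split => //; exact: sm0.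
  move=> x t y u [hx ->] [hy ->]; split; last by rewrite subrr.
  by apply: smD => //; apply: smN.
have gf : gfun G by move=> t [_ ->].
have [tau [tau0 htau]] : exists tau : qz, tau <> 0 /\ forall k t, G (m *~ k) t -> t = tau *~ k.
  case: (d_analysis m gs gf) => [hn|[n [n0 [t0 [Cn _]] hdiv]]].
    exists (qpi (2%:R^-1)); split; first exact: qz_half.
    by move=> k t h; rewrite (hn k t h) mulr0z; case: h.
  have n1 : (1 < n)%N.
    rewrite ltn_neqAle n0 andbT; apply/eqP => en; apply: nCm.
    by move: Cn; rewrite -en mulr1z.
  have [u [un u0]] := qz_sep n1.
  exists u; split => // k t h.
  have [q hq] := dvdzP (hdiv _ _ h).
  by rewrite hq mulrC mulrzA un mul0rz; case: h.
have [h [hs hG]] := graph_extend (gext_sub m tau gs) (gext_fun gs gf htau).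
have hC : forall c, C c -> h c = 0.
  by move=> c Cc; apply: hG; apply: gext_in.
exists (exist _ h (conj hs hC)) => /=.
by rewrite (hG m tau (gext_b m tau gs)).
Qed.

Lemma qker (M : lmodType R) (C : submod M) (m : M) : qmap C m = 0 <-> C m.
Proof.
split => [h|Cm].
  apply: NNPP => nCm; have [phi hphi] := sep_exists nCm.
  apply: hphi; have := congr1 (fun F => Jval F phi 1) h; rewrite /= scale1r => ->.
  by [].
apply: Jt_inj => phi a /=; apply: hC; exact: smZ.
Qed.

Lemma Jinj (M : lmodType R) (C : submod M) : injective_module (Jmod C).
Proof.
move=> A B f g finj.
have ext : forall phi : Hom C, exists psi : B -> qz,
    (forall x y, psi (x - y) = psi x - psi y) /\ forall a, psi (f a) = Jval (g a) phi 1.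
  move=> phi; pose G := fun x t => exists a, x = f a /\ t = Jval (g a) phi 1.
  have gs : gsub G.
    split; first by exists 0; rewrite !linear0.
    move=> x t y u [a [-> ->]] [a' [-> ->]]; exists (a - a').
    by rewrite !linearB.
  have gf : gfun G.
    move=> t [a [fa ->]].
    have a0 : a = 0 by apply: finj; rewrite -fa linear0.
    by rewrite a0 linear0.
  have [h [hs hG]] := graph_extend gs gf.
  exists h; split => // a; apply: hG; by exists a.
pose psi phi := proj1_sig (constructive_indefinite_description _ (ext phi)).
have psiP phi : (forall x y, psi phi (x - y) = psi phi x - psi phi y) /\
    forall a, psi phi (f a) = Jval (g a) phi 1.
  by rewrite /psi; case: constructive_indefinite_description.
have hproof (b : B) : forall (phi : Hom C) s t,
  (fun (phi : Hom C) s => psi phi (s *: b)) phi (s - t) =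
  (fun (phi : Hom C) s => psi phi (s *: b)) phi s - (fun (phi : Hom C) s => psi phi (s *: b)) phi t.
  by move=> phi s t /=; rewrite scalerBl (proj1 (psiP phi)).
pose hm (b : B) : Jmod C := exist _ _ (hproof b).
have hlin : linear hm.
  move=> r x y; apply: Jt_inj => phi s /=.
  by rewrite scalerDr (saD (proj1 (psiP phi))) scalerA.
exists (mkLin hlin) => a; apply: Jt_inj => phi s /=.
by rewrite -linearZ (proj2 (psiP phi)) linearZ /= mul1r.
Qed.

Lemma EI (M : lmodType R) (C : submod M) :
  exists (J : lmodType R) (q : {linear M -> J}), injective_module J /\ forall x, q x = 0 <-> C x.
Proof. by exists (Jmod C), (qlin C); split; [exact: Jinj | move=> x; exact: qker]. Qed.

End EI.

Section ResEx.
Variable R : comNzRingType.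

Definition zeroS (X : lmodType R) : submod X.
refine (@Submod R X (fun x => x = 0) _ _ _) => //.
- by move=> x y -> ->; rewrite addr0.
- by move=> r x ->; rewrite scaler0.
Defined.

Definition EIsig (X : lmodType R) (C : submod X) :
  {J : lmodType R & {q : {linear X -> J} | injective_module J /\ forall x, q x = 0 <-> C x}}.
have [J hJ] := constructive_indefinite_description _ (EI C).
have [q hq] := constructive_indefinite_description _ hJ.
exact: existT _ J (exist _ q hq).
Defined.

Variable M : lmodType R.

Definition St := {P : lmodType R & {Q : lmodType R & {linear P -> Q}}}.

Definition st_next (s : St) : St :=
  existT _ (projT1 (projT2 s))
   (existT _ (projT1 (EIsig (imS (projT2 (projT2 s)))))
      (proj1_sig (projT2 (EIsig (imS (projT2 (projT2 s))))))).

Fixpoint stage (j : nat) : St :=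
  match j with
  | O => existT _ M (existT _ (projT1 (EIsig (zeroS M))) (proj1_sig (projT2 (EIsig (zeroS M)))))
  | j'.+1 => st_next (stage j')
  end.

Definition rI (j : nat) : lmodType R := projT1 (projT2 (stage j)).
Definition rd (j : nat) : {linear rI j -> rI j.+1} := projT2 (projT2 (stage j.+1)).
Definition reps : {linear M -> rI 0%N} := projT2 (projT2 (stage 0%N)).

Lemma rI_inj j : injective_module (rI j).
Proof.
case: j => [|j]; rewrite /rI /=.
  exact: (proj1 (proj2_sig (projT2 (EIsig (zeroS M))))).
exact: (proj1 (proj2_sig (projT2 (EIsig (imS (projT2 (projT2 (stage j)))))))).
Qed.

Lemma rd_ker j x : rd j x = 0 <-> imS (projT2 (projT2 (stage j))) x.
Proof. exact: (proj2 (proj2_sig (projT2 (EIsig (imS (projT2 (projT2 (stage j)))))))). Qed.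

Lemma reps_ker x : reps x = 0 <-> x = 0.
Proof. exact: (proj2 (proj2_sig (projT2 (EIsig (zeroS M))))). Qed.

Lemma res_exists : inj_resolution rd reps.
Proof.
split.
- move=> x y e; apply/eqP; rewrite -subr_eq0; apply/eqP/reps_ker.
  by rewrite linearB e subrr.
- by move=> x; rewrite rd_ker.
- by move=> i x; rewrite rd_ker.
- exact: rI_inj.
Qed.

End ResEx.

Lemma resolution_exists (R : comNzRingType) (M : lmodType R) :
  exists (I : nat -> lmodType R) (d : forall i, {linear I i -> I i.+1})
    (eps : {linear M -> I 0%N}), inj_resolution d eps.
Proof. by exists (rI M), (rd M), (reps M); exact: res_exists. Qed.

Section Hull.
Variable R : comNzRingType.

Section ZS.
Variable X : lmodType R.
Definition issub (Y : X -> Prop) :=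
  [/\ Y 0, (forall x y, Y x -> Y y -> Y (x + y)) & (forall r x, Y x -> Y (r *: x))].

Definition mkS (Y : X -> Prop) (h : issub Y) : submod X :=
  let: And3 h0 hD hZ := h in @Submod R X Y h0 hD hZ.
Lemma mkSE Y h x : mkS (Y:=Y) h x = Y x.
Proof. by case: h. Qed.

Lemma zorn_submod (Pr : (X -> Prop) -> Prop) :
  (forall F : (X -> Prop) -> Prop, (forall Y, F Y -> issub Y /\ Pr Y) ->
     (forall Y1 Y2, F Y1 -> F Y2 -> (forall t, Y1 t -> Y2 t) \/ (forall t, Y2 t -> Y1 t)) ->
     (exists Y, F Y) -> Pr (fun t => exists2 Y, F Y & Y t)) ->
  (exists Y, issub Y /\ Pr Y) ->
  exists A, [/\ issub A, Pr A & forall B, (forall t, A t -> B t) -> issub B -> Pr B ->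
      forall t, B t -> A t].
Proof.
move=> hch [Y0 [sY0 PY0]].
pose P Y := (forall x, ~ Y x) \/ (issub Y /\ Pr Y).
have [|A [PA Amax]] := @zorn_max X P.
  move=> F FP Ftot.
  have FF' t : (exists2 Y, F Y & Y t) -> exists2 Y, (F Y /\ issub Y /\ Pr Y) & Y t.
    move=> [Y FY Yt]; exists Y => //; split => //.
    by have := FP Y FY; rewrite /P; case => [/(_ t Yt)|].
  case: (classic (exists Y, F Y /\ issub Y /\ Pr Y)) => [hne|hne]; last first.
    by left => t /FF' [Y F'Y _]; apply: hne; exists Y.
  have eqU : (fun t => exists2 Y, F Y & Y t) =
             (fun t => exists2 Y, (F Y /\ issub Y /\ Pr Y) & Y t).
    apply: functional_extensionality => t; apply: propositional_extensionality.
    split; first exact: FF'.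
    by move=> [Y [FY _] Yt]; exists Y.
  right; rewrite eqU; split; last first.
    apply: hch => //; first by move=> Y [_ h].
    by move=> Y1 Y2 [F1 _] [F2 _]; apply: Ftot.
  have [Y [FY [sY PY]]] := hne; have [s0 _ _] := sY.
  split; first by exists Y => //; split.
    move=> x y [Y1 hY1 h1] [Y2 hY2 h2].
    have [F1 [[_ s1 _] _]] := hY1; have [F2 [[_ s2 _] _]] := hY2.
    case: (Ftot _ _ F1 F2) => sub.
      by exists Y2 => //; apply: s2 => //; apply: sub.
    by exists Y1 => //; apply: s1 => //; apply: sub.
  move=> r x [Y1 hY1 h1]; have [F1 [[_ _ s1] _]] := hY1.
  by exists Y1 => //; apply: s1.
have [sA PrA] : issub A /\ Pr A.
  case: PA => // hA; exfalso.
  have := Amax Y0 (fun t h => False_ind _ (hA t h)) (or_intror (conj sY0 PY0)) 0.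
  by case: sY0 => h0 _ _ /(_ h0) /hA.
exists A; split => // B AB sB PB; apply: Amax => //; by right.
Qed.
End ZS.

Variable Phi : spec R -> Prop.

Lemma hull (B : lmodType R) : GammaZero Phi B ->
  exists (E : lmodType R) (al : {linear B -> E}),
    [/\ injective al, injective_module E & GammaZero Phi E].
Proof.
move=> gB.
have [E0 [q [iE0 kq]]] := EI (zeroS B).
have qinj : injective q.
  move=> x y e; apply/eqP; rewrite -subr_eq0; apply/eqP/kq.
  by rewrite linearB e subrr.
pose Q := fun e => exists b, q b = e.
pose ess (Y : E0 -> Prop) := forall x, Y x -> x <> 0 -> exists r, r *: x <> 0 /\ Q (r *: x).
pose Pr1 (Y : E0 -> Prop) := (forall x, Q x -> Y x) /\ ess Y.
have [||H [sH [QH eH] Hmax]] := @zorn_submod E0 Pr1.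
- move=> F FP Ftot [Y0 FY0]; rewrite /Pr1 /ess; split.
    by move=> x Qx; exists Y0 => //; apply: (proj1 (proj2 (FP _ FY0))).
  by move=> x [Y FY Yx] x0; apply: (proj2 (proj2 (FP _ FY))).
- exists Q; split.
    split; first by exists 0; rewrite linear0.
      by move=> _ _ [b <-] [c <-]; exists (b + c); rewrite linearD.
    by move=> r _ [b <-]; exists (r *: b); rewrite linearZ.
  rewrite /Pr1 /ess; split => [x Qx|x [b <-] qb0]; first by [].
  exists 1; rewrite scale1r; split; [exact: qb0 | by exists b].
have [H0 HD HZ] := sH.
have HB x y : H x -> H y -> H (x - y).
  by move=> hx hy; apply: HD => //; rewrite -scaleN1r; apply: HZ.
pose Pr2 (Y : E0 -> Prop) := forall x, Y x -> H x -> x = 0.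
have [||K [sK PK Kmax]] := @zorn_submod E0 Pr2.
- by move=> F FP Ftot _ x [Y FY Yx] Hx; exact: (proj2 (FP _ FY)) x Yx Hx.
- exists (fun x => x = 0); split; last by move=> x ->.
  split => //; first by move=> x y -> ->; rewrite addr0.
  by move=> r x ->; rewrite scaler0.
have [K0 KD KZ] := sK.
have KB x y : K x -> K y -> K (x - y).
  by move=> hx hy; apply: KD => //; rewrite -scaleN1r; apply: KZ.
pose Sp := fun e => exists h k, H h /\ K k /\ e = h + k.
have S0 : Sp 0 by exists 0, 0; rewrite addr0.
have SD : forall x y, Sp x -> Sp y -> Sp (x + y).
  move=> _ _ [h1 [k1 [H1 [K1 ->]]]] [h2 [k2 [H2 [K2 ->]]]].
  by exists (h1 + h2), (k1 + k2); do ! split; [apply: HD | apply: KD | rewrite addrACA].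
have SZ : forall r x, Sp x -> Sp (r *: x).
  move=> r _ [h1 [k1 [H1 [K1 ->]]]].
  by exists (r *: h1), (r *: k1); do ! split; [apply: HZ | apply: KZ | rewrite scalerDr].
pose S := @Submod R E0 Sp S0 SD SZ.
have uniq h k h' k' : H h -> K k -> H h' -> K k' -> h + k = h' + k' -> h = h'.
  move=> Hh Kk Hh' Kk' e; apply/eqP; rewrite -subr_eq0; apply/eqP.
  apply: PK; last exact: HB.
  have -> : h - h' = k' - k.
    by apply/eqP; rewrite subr_eq addrAC eq_sym subr_eq addrC e.
  exact: KB.
pose hp (s : subm S) := proj1_sig (constructive_indefinite_description _ (proj2_sig s)).
have hpP (s : subm S) : exists k, H (hp s) /\ K k /\ proj1_sig s = hp s + k.
  by rewrite /hp; case: constructive_indefinite_description.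
have hpE (s : subm S) h k : H h -> K k -> proj1_sig s = h + k -> hp s = h.
  move=> Hh Kk e; have [k' [Hp [Kk' e']]] := hpP s.
  by apply: (uniq _ _ _ _ Hp Kk' Hh Kk); rewrite -e' -e.
have glin : linear hp.
  move=> r s1 s2; have [k1 [H1 [K1 e1]]] := hpP s1; have [k2 [H2 [K2 e2]]] := hpP s2.
  apply: (hpE _ _ (r *: k1 + k2)).
  - by apply: HD => //; apply: HZ.
  - by apply: KD => //; apply: KZ.
  - by rewrite /= e1 e2 scalerDr addrACA.
have [psi hpsi] := iE0 _ _ (incl S) (mkLin glin) (@incl_inj _ _ S).
have psiH h : H h -> psi h = h.
  move=> Hh; have Sh : S h by exists h, 0; rewrite addr0.
  have := hpsi (inS Sh); rewrite incl_inS => ->; rewrite mkLinE.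
  by apply: (hpE _ _ 0) => //; rewrite addr0.
have psiK k : K k -> psi k = 0.
  move=> Kk; have Sk : S k by exists 0, k; rewrite add0r.
  have := hpsi (inS Sk); rewrite incl_inS => ->; rewrite mkLinE.
  by apply: (hpE _ _ k) => //; rewrite add0r.
have kerK e : psi e = 0 -> K e.
  move=> pe; apply: (Kmax (fun e => psi e = 0)).
  - by move=> t /psiK.
  - split; first by rewrite linear0.
      by move=> x y hx hy; rewrite linearD hx hy addr0.
    by move=> r x hx; rewrite linearZ_LR hx scaler0.
  - by move=> x px Hx; rewrite -(psiH _ Hx).
  - exact: pe.
have imH e : H (psi e).
  apply: (Hmax (fun x => exists e, psi e = x)); last by exists e.
  - by move=> t Ht; exists t; apply: psiH.
  - split; first by exists 0; rewrite linear0.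
      by move=> _ _ [x <-] [y <-]; exists (x + y); rewrite linearD.
    by move=> r _ [x <-]; exists (r *: x); rewrite linearZ.
  split; first by move=> x Qx; exists x; apply: psiH; apply: QH.
  move=> _ [e' <-] x0.
  have nK : ~ K e' by move=> /psiK.
  pose K2 := fun z => exists k r, K k /\ z = k + r *: e'.
  have [z [K2z [Hz z0]]] : exists z, K2 z /\ H z /\ z <> 0.
    apply: NNPP => hn; apply: nK; apply: (Kmax K2).
    - by move=> t Kt; exists t, 0; rewrite scale0r addr0.
    - split; first by exists 0, 0; rewrite scale0r addr0.
        move=> _ _ [k1 [r1 [K1 ->]]] [k2 [r2 [K2' ->]]].
        by exists (k1 + k2), (r1 + r2); split; [apply: KD | rewrite scalerDl addrACA].
      move=> r _ [k1 [r1 [K1 ->]]].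
      by exists (r *: k1), (r * r1); split; [apply: KZ | rewrite scalerDr scalerA].
    - move=> x K2x Hx; apply: NNPP => x0'; apply: hn; exists x; split => //.
    - by exists 0, 1; rewrite scale1r add0r.
  have [k [r [Kk ez]]] := K2z.
  have rz : r *: psi e' = z.
    have := psiH _ Hz; rewrite {1}ez linearD linearZ_LR (psiK _ Kk) add0r.
    by [].
  have [r' [r'z Qr'z]] := eH z Hz z0.
  by exists (r' * r); rewrite -scalerA rz; split.
pose HS := @Submod R E0 H H0 HD HZ.
pose al b := @inS R E0 HS (q b) (QH _ (ex_intro _ b erefl)).
have allin : linear al.
  by move=> r x y; apply: sval_inj; rewrite /= linearP.
exists (subm_t HS), (mkLin allin); split.
- by move=> x y /(congr1 (fun s : subm HS => proj1_sig s)) /= /qinj.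
- move=> A B' f g finj.
  have [h' hh'] := iE0 _ _ f (lcomp (incl HS) g) finj.
  pose hm b := @inS R E0 HS (psi (h' b)) (imH _).
  have hmlin : linear hm by move=> r x y; apply: sval_inj; rewrite /= !linearP.
  exists (mkLin hmlin) => a; apply: sval_inj; rewrite /= hh' /=.
  by apply: psiH; exact: (proj2_sig (g a)).
- move=> x gx; apply: NNPP => x0.
  have ix0 : proj1_sig x <> 0 by move=> e; apply: x0; apply: sval_inj.
  have [r [rx [b eb]]] := eH _ (proj2_sig x) ix0.
  have gb : in_Gamma Phi b.
    apply: (gamma_inj (f := mkLin allin)).
      by move=> y z /(congr1 (fun s : subm HS => proj1_sig s)) /= /qinj.
    have -> : mkLin allin b = r *: x by apply: sval_inj; rewrite /= eb.
    exact: gammaZ.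
  by apply: rx; rewrite -eb (gB b gb) linear0.
Qed.
End Hull.

Section Main.
Variable R : comNzRingType.
Variable Phi : spec R -> Prop.

Lemma S1' (A E B : lmodType R) (al : {linear A -> E}) (be : {linear E -> B}) :
  injective al -> (forall b, exists e, be e = b) ->
  (forall e, be e = 0 <-> exists a, al a = e) ->
  injective_module E -> GammaZero Phi E ->
  forall i, H_Phi_zero Phi B i -> H_Phi_zero Phi A i.+1.
Proof. move=> ha hb hx hE gE i; apply: (S1 ha hb hx hE gE); exact: resolution_exists. Qed.

Lemma S2' (A E B : lmodType R) (al : {linear A -> E}) (be : {linear E -> B}) :
  injective al -> (forall b, exists e, be e = b) ->
  (forall e, be e = 0 <-> exists a, al a = e) ->
  injective_module E -> GammaZero Phi E ->
  forall i, H_Phi_zero Phi A i.+1 -> H_Phi_zero Phi B i.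
Proof. move=> ha hb hx hE gE i; exact: (S2 ha hb hx hE gE). Qed.

Lemma H0_gz' (M : lmodType R) : H_Phi_zero Phi M 0 -> GammaZero Phi M.
Proof. by have [I [d [eps r]]] := resolution_exists M; apply: H0_gz r. Qed.

Lemma cokernel (X Y : lmodType R) (f : {linear X -> Y}) :
  exists (Z : lmodType R) (c : {linear Y -> Z}),
    (forall z, exists y, c y = z) /\ (forall y, c y = 0 <-> exists x, f x = y).
Proof.
have [J [q [_ kq]]] := EI (imS f).
pose c y := @inS R J (imS q) (q y) (ex_intro _ y erefl).
have clin : linear c by move=> r x y; apply: sval_inj; rewrite /= linearP.
exists (subm_t (imS q)), (mkLin clin); split.
  by move=> [z [y hy]]; exists y; apply: sval_inj.
move=> y; split.
  by move=> /(congr1 (fun s : subm (imS q) => proj1_sig s)) /= /kq.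
by move=> h; apply: sval_inj => /=; apply/kq.
Qed.

Definition Pre (j : nat) (B : lmodType R) :=
  exists (P : nat -> lmodType R) (e : forall i, {linear P i.+1 -> P i}) (pi : {linear P 0%N -> B}),
    [/\ (forall c, exists x, pi x = c), (forall x, pi x = 0 <-> exists y, e 0%N y = x),
        (forall i x, e i x = 0 <-> exists y, e i.+1 y = x) &
        (forall i, (i < j)%N -> injective_module (P i) /\ forall p, Ass (P i) p -> ~ Phi p)].

Lemma zlin (X Y : lmodType R) : linear (fun _ : X => (0 : Y)).
Proof. by move=> r x y; rewrite scaler0 addr0. Qed.

Lemma pre0 B : Pre 0 B.
Proof.
pose e (i : nat) : {linear B -> B} := if odd i then lid B else mkLin (@zlin B B).
exists (fun _ => B), e, (lid B); split => //.
- by move=> c; exists c.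
- by move=> x /=; split => [->|[y <-]]; [exists 0 | ].
- move=> i x; rewrite /e /=; case: (odd i) => /=.
    by split => [->|[y <-]]; [exists 0 | ].
  by split => // _; exists x.
Qed.

Lemma pre_weaken j k B : Pre j B -> (k <= j)%N -> Pre k B.
Proof.
move=> [P [e [pi [h1 h2 h3 h4]]]] kj; exists P, e, pi; split => // i ik.
by apply: h4; apply: leq_trans kj.
Qed.

Lemma pre_shift j (B J B' : lmodType R) (f : {linear B -> J}) (c : {linear J -> B'}) :
  Pre j B -> injective f -> injective_module J -> (forall p, Ass J p -> ~ Phi p) ->
  (forall z, exists y, c y = z) -> (forall y, c y = 0 <-> exists x, f x = y) -> Pre j.+1 B'.
Proof.
move=> [P [e [pi [h1 h2 h3 h4]]]] fi iJ aJ hc kc.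
pose P' (k : nat) : lmodType R := match k with O => J | k'.+1 => P k' end.
pose e' (k : nat) : {linear P' k.+1 -> P' k} :=
  match k return {linear P' k.+1 -> P' k} with O => lcomp f pi | k'.+1 => e k' end.
exists P', e', c; split => //.
- move=> x; rewrite kc; split => [[b <-]|[y <-]]; last by exists (pi y).
  by have [y <-] := h1 b; exists y.
- case=> [|i] x /=.
    split => [h|[y <-]]; last by rewrite (proj2 (h2 _)) ?linear0 //; exists y.
    apply/h2; apply: fi; by rewrite h linear0.
  exact: h3.
- by case=> [|i] //= hi; apply: h4.
Qed.

Hypothesis hR : noetherian R.
Hypothesis hPhi : specialization_closed Phi.

Lemma coh_good n : n_coherent (fun p => ~ Phi p) n ->
  forall i (B : lmodType R), Pre n.+1 B -> H_Phi_zero Phi B i.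
Proof.
move=> nc; elim=> [|i ih] B [P [e [pi [h1 h2 h3 h4]]]].
  have [J [f [fi iJ aJ]]] := nc B P e pi h1 h2 h3 (fun i hi => h4 i hi).
  apply: gz_H0 => x gx; apply: fi; rewrite linear0.
  by apply: (ass_gz hR aJ); apply: gamma_lin.
have [J [f [fi iJ aJ]]] := nc B P e pi h1 h2 h3 (fun i hi => h4 i hi).
have [Z [c [hc kc]]] := cokernel f.
have preZ : Pre n.+1 Z.
  apply: (pre_weaken (j := n.+2)) => //.
  by apply: (pre_shift (f := f) (c := c)) => //; exists P, e, pi; split.
apply: (S1' fi hc kc iJ (ass_gz hR aJ)); exact: ih.
Qed.

Lemma dir1 n : n_coherent (fun p => ~ Phi p) n ->
  forall M : lmodType R, (forall i, (i <= n)%N -> H_Phi_zero Phi M i) ->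
  forall i, (n < i)%N -> H_Phi_zero Phi M i.
Proof.
move=> nc M hM.
have claim : forall j, (j <= n.+1)%N -> exists B : lmodType R, [/\ Pre j B,
    (forall i, (i + j <= n)%N -> H_Phi_zero Phi B i) &
    (forall i, H_Phi_zero Phi B i -> H_Phi_zero Phi M (i + j))].
  elim=> [|j ih] hj.
    exists M; split; first exact: pre0.
      by move=> i; rewrite addn0; apply: hM.
    by move=> i; rewrite addn0.
  have [B [preB hB hBM]] := ih (ltnW hj).
  have gB : GammaZero Phi B by apply: H0_gz'; apply: hB; rewrite add0n -ltnS.
  have [E [al [ali iE gE]]] := hull gB.
  have [Z [c [hc kc]]] := cokernel al.
  exists Z; split.
  - by apply: (pre_shift (f := al) (c := c)) => //; apply: gz_ass.
  - move=> i hi; apply: (S2' ali hc kc iE gE); apply: hB.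
    by rewrite addSnnS.
  - move=> i hZ; rewrite -addSnnS; apply: hBM.
    exact: (S1' ali hc kc iE gE).
have [B [preB _ hBM]] := claim n.+1 (leqnn _).
move=> i hi.
have -> : i = (i - n.+1 + n.+1)%N by rewrite subnK.
by apply: hBM; apply: (coh_good nc).
Qed.

End Main.

Section Dir2.
Variable R : comNzRingType.
Variable Phi : spec R -> Prop.
Hypothesis hR : noetherian R.
Hypothesis hPhi : specialization_closed Phi.

Definition cores (X Y : lmodType R) (g : {linear X -> Y}) (S : submod Y) (h : forall x, S (g x)) :
  {linear X -> subm_t S}.
refine (@mkLin R X (subm_t S) (fun x => @inS R Y S (g x) (h x)) _).
by move=> r x y; apply: sval_inj; rewrite /= linearP.
Defined.

Lemma dir2 n :
  (forall M : lmodType R, (forall i, (i <= n)%N -> H_Phi_zero Phi M i) ->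
     forall i, (n < i)%N -> H_Phi_zero Phi M i) ->
  n_coherent (fun p => ~ Phi p) n.
Proof.
move=> hyp C P e pi h1 h2 h3 h4.
have gzP i : (i <= n)%N -> GammaZero Phi (P i).
  by move=> hi; apply: (ass_gz hR); exact: (proj2 (h4 i hi)).
have iP i : (i <= n)%N -> injective_module (P i) by move=> hi; exact: (proj1 (h4 i hi)).
pose K (j : nat) : lmodType R :=
  match j with O => subm_t (kerS pi) | j'.+1 => subm_t (kerS (e j')) end.
have KG j : (j <= n)%N -> GammaZero Phi (K j).
  case: j => [|j] hj x gx; apply: (@incl_inj _ _ _); rewrite linear0.
    by apply: (gzP 0%N hj); apply: gamma_lin.
  by apply: (gzP j.+1 hj); apply: gamma_lin.
have ses j : exists be : {linear P j.+1 -> K j},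
    (forall b, exists x, be x = b) /\
    (forall x, be x = 0 <-> exists a : K j.+1, incl (kerS (e j)) a = x).
  case: j => [|j].
    have hm x : (kerS pi) (e 0%N x) by apply/h2; exists x.
    exists (cores hm); split.
      by move=> [y hy]; have [x ex] := (proj1 (h2 y)) hy; exists x; apply: sval_inj.
    move=> x; split.
      move=> /(congr1 (fun s : subm (kerS pi) => proj1_sig s)) /= hx.
      by exists (@inS R _ (kerS (e 0%N)) x hx).
    by move=> [[a ha] <-]; apply: sval_inj.
  have hm x : (kerS (e j)) (e j.+1 x) by apply/h3; exists x.
  exists (cores hm); split.
    by move=> [y hy]; have [x ex] := (proj1 (h3 j y)) hy; exists x; apply: sval_inj.
  move=> x; split.
    move=> /(congr1 (fun s : subm (kerS (e j)) => proj1_sig s)) /= hx.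
    by exists (@inS R _ (kerS (e j.+1)) x hx).
  by move=> [[a ha] <-]; apply: sval_inj.
have inj_incl j : injective (incl (kerS (e j))) by exact: incl_inj.
have ha : forall i j, (i <= j)%N -> (j <= n)%N -> H_Phi_zero Phi (K j) i.
  elim=> [|i ih] j hij hjn; first by apply: gz_H0; apply: KG.
  case: j hij hjn => [//|j] hij hjn.
  have [be [hb hx]] := ses j.
  apply: (S1' (inj_incl j) hb hx (iP _ hjn) (gzP _ hjn)).
  exact: (ih j hij (ltnW hjn)).
have hb : H_Phi_zero Phi (K n) n.+1.
  by apply: hyp => // i hi; apply: ha.
have hc : forall k j, (j + k)%N = n -> H_Phi_zero Phi (K j) j.+1.
  elim=> [|k ih] j hjk; first by move: hjk; rewrite addn0 => ->.
  have [be [hb' hx]] := ses j.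
  have hjn : (j.+1 <= n)%N by rewrite -hjk addnS ltnS leq_addr.
  apply: (S2' (inj_incl j) hb' hx (iP _ hjn) (gzP _ hjn)).
  exact: (ih j.+1 (etrans (addSnnS j k) hjk)).
have hd : H_Phi_zero Phi C 0.
  have hp : forall x, pi x = 0 <-> exists a : K 0%N, incl (kerS pi) a = x.
    move=> x; split => [hx|[[a ha'] <-]] //.
    by exists (@inS R _ (kerS pi) x hx).
  apply: (S2' (@incl_inj _ _ (kerS pi)) h1 hp (iP 0%N (leq0n n)) (gzP 0%N (leq0n n))).
  exact: (hc n 0%N (add0n n)).
have [J [f [fi iJ gJ]]] := hull (H0_gz' hd).
exists J, f; split => //.
exact: gz_ass.
Qed.

End Dir2.

Unset Implicit Arguments.
Close Scope ring_scope.

Theorem proposition3p8 (R : comNzRingType) (hR : noetherian R)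
  (Phi : spec R -> Prop) (hPhi : specialization_closed Phi) (n : nat) :
  n_coherent (fun p => ~ Phi p) n <->
  (forall M : lmodType R,
     (forall i, (i <= n)%N -> H_Phi_zero Phi M i) ->
     forall i, (n < i)%N -> H_Phi_zero Phi M i).
Proof.
split; first exact: dir1.
exact: dir2.
Qed.
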